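(* Let $p\ge 4$ and let $\Sigma\in\mathbb{R}^{p\times p}$ be positive definite. Then $\Sigma\in F_{p,1}\setminus F_{p,0}$ if and only if every $4\times 4$ principal submatrix of $\Sigma$ belongs to $F_{4,1}$ and at least one $2\times 2$ principal submatrix of $\Sigma$ does not belong to $F_{2,0}$.
   Context: For integers $p\ge 1$, $m\ge 1$, $F_{p,m}=\{\Delta+\Gamma\Gamma^t : \Delta \text{ a positive definite diagonal } p\times p \text{ matrix},\ \Gamma\in\mathbb{R}^{p\times m}\}$. $F_{p,0}$ is the set of positive definite diagonal $p\times p$ matrices. *)

(* Defs.v *)
(* Real matrices are stated over an arbitrary real closed field R. *)
From HB Require Import structures.
From mathcomp Require Import all_boot all_order all_algebra.
Set Implicit Arguments. Unset Strict Implicit. Unset Printing Implicit Defensive.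
Import Order.TTheory GRing.Theory Num.Theory.
Local Open Scope ring_scope.

Definition posdef (R : rcfType) (p : nat) (A : 'M[R]_p) : Prop :=
  A^T = A /\ forall v : 'cV[R]_p, v != 0 -> 0 < (v^T *m A *m v) 0 0.

Definition inF0 (R : rcfType) (p : nat) (S : 'M[R]_p) : Prop :=
  is_diag_mx S /\ posdef S.

Definition inF (R : rcfType) (p m : nat) (S : 'M[R]_p) : Prop :=
  exists (D : 'M[R]_p) (G : 'M[R]_(p, m)), inF0 D /\ S = D + G *m G^T.

Definition incr_sel (k p : nat) (f : 'I_k -> 'I_p) : Prop :=
  forall i j : 'I_k, (i < j)%N -> (f i < f j)%N.

Definition principal_sub (R : rcfType) (k p : nat) (f : 'I_k -> 'I_p) (S : 'M[R]_p)
  : 'M[R]_k := mxsub f f S.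

(* Main.v *)
Require Import Defs.
From HB Require Import structures.
From mathcomp Require Import all_boot all_order all_algebra.
Import Order.TTheory GRing.Theory Num.Theory.
Local Open Scope ring_scope.
Set Implicit Arguments. Unset Strict Implicit.

Section Helpers.
Variable R : rcfType.

Lemma quad_diag p (D : 'M[R]_p) (v : 'cV[R]_p) : is_diag_mx D ->
  (v^T *m D *m v) 0 0 = \sum_i v i 0 * D i i * v i 0.
Proof.
move=> /is_diag_mxP dD; rewrite !mxE; apply: eq_bigr => k _.
rewrite !mxE (bigD1 k) //= big1 ?addr0 ?mxE //.
by move=> l hl; rewrite dD ?mulr0 //.
Qed.

Lemma diag_posdef p (D : 'M[R]_p) : is_diag_mx D -> (forall i, 0 < D i i) -> posdef D.
Proof.
move=> dD pD; split.
  apply/matrixP => i j; rewrite mxE; case: (eqVneq i j) => [->//|hij].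
  by move/is_diag_mxP: dD => dD; rewrite !dD // eq_sym.
move=> v hv; rewrite quad_diag //.
have [k hk] : exists k, v k 0 != 0.
  apply/existsP; apply: contraR hv; rewrite negb_exists => /forallP h.
  apply/eqP/matrixP => i j; rewrite ord1 mxE; apply/eqP; move: (h i); by rewrite negbK.
rewrite (bigD1 k) //= -[X in X < _](addr0 0); apply: ltr_leD.
  rewrite mulrAC -expr2 mulr_gt0 ?pD //.
  by rewrite lt0r sqr_ge0 sqrf_eq0 hk.
apply: sumr_ge0 => i _; rewrite mulrAC -expr2 mulr_ge0 ?sqr_ge0 ?ltW ?pD //.
Qed.

Lemma pos_diag p (A : 'M[R]_p) : posdef A -> forall i, 0 < A i i.
Proof.
move=> [_ h] i; have := h (delta_mx i 0).
rewrite trmx_delta -rowE -colE !mxE; apply.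
by apply/negP => /eqP/matrixP /(_ i 0); rewrite !mxE !eqxx /= => /eqP; rewrite oner_eq0.
Qed.

End Helpers.
Lemma sort_sel p (x0 : 'I_p) (A : {set 'I_p}) k : #|A| = k ->
  exists f : 'I_k -> 'I_p, incr_sel f /\ forall u, u \in A -> exists i, f i = u.
Proof.
move=> hk.
have hsz : size (enum A) = k by rewrite -cardE.
have inc_A : sorted ltn (map val (enum A)).
  rewrite -[enum _](eq_filter (mem_enum _)).
  rewrite -(eq_filter (mem_map val_inj _)) -filter_map.
  by rewrite (sorted_filter ltn_trans) // unlock val_ord_enum iota_ltn_sorted.
exists (fun i => nth x0 (enum A) i); split.
  move=> i j hij.
  have hi : (i < size (map val (enum A)))%N by rewrite size_map hsz.
  have hj : (j < size (map val (enum A)))%N by rewrite size_map hsz.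
  have := sorted_ltn_nth ltn_trans (val x0) inc_A i j hi hj hij.
  by rewrite !(nth_map x0) // -?(size_map val).
move=> u hu.
have hi : (index u (enum A) < k)%N by rewrite -hsz index_mem mem_enum.
by exists (Ordinal hi); rewrite /= nth_index // mem_enum.
Qed.

Lemma fresh3 p (hp : (4 <= p)%N) (a b c : 'I_p) : exists d, [&& d != a, d != b & d != c].
Proof.
have [/existsP //|] := boolP [exists d, [&& d != a, d != b & d != c]].
rewrite negb_exists => /forallP h; exfalso.
have : (#|'I_p| <= #|[:: a; b; c]|)%N.
  apply: subset_leq_card; apply/subsetP => x _; move: (h x).
  by rewrite !inE -!negb_or negbK => /orP[->|/orP[]->]; rewrite ?orbT.
rewrite card_ord => /leq_trans/(_ (card_size _)) /= h3.
by have := leq_trans hp h3.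
Qed.

Section Main.
Variables (R : rcfType) (p : nat) (S : 'M[R]_p).
Hypothesis H4 : forall f : 'I_4 -> 'I_p, incr_sel f -> inF 1 (principal_sub f S).

Lemma E4g (g : 'I_4 -> 'I_p) : injective g -> exists x : 'I_4 -> R,
  (forall i j, i != j -> S (g i) (g j) = x i * x j) /\ (forall i, x i ^+ 2 < S (g i) (g i)).
Proof.
move=> ginj.
have hA : #|g @: [set: 'I_4]| = 4%N by rewrite card_imset // cardsT card_ord.
have [f [finc fsurj]] := sort_sel (g ord0) hA.
have [D [G [[dD pD] hS]]] := H4 finc.
pose idx i := odflt ord0 [pick j | f j == g i].
have hidx i : f (idx i) = g i.
  rewrite /idx; case: pickP => [j /eqP //|hn].
  have [j hj] := fsurj (g i) (imset_f _ (in_setT i)).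
  by move: (hn j); rewrite hj eqxx.
have ent i j : S (g i) (g j) = D (idx i) (idx j) + G (idx i) 0 * G (idx j) 0.
  have := hS; move/matrixP/(_ (idx i) (idx j)).
  by rewrite /principal_sub !mxE !hidx big_ord1 !mxE.
exists (fun i => G (idx i) 0); split.
  move=> i j hij; rewrite ent; move/is_diag_mxP: dD => ->; rewrite ?add0r //.
  apply: contra hij => /eqP /val_inj hij; apply/eqP/ginj.
  by rewrite -!hidx hij.
move=> i; rewrite ent expr2 -[X in X < _]add0r ltrD2r.
exact: pos_diag.
Qed.


Hypothesis hsym : forall i j, S i j = S j i.

Lemma E4 a b c d : uniq [:: a; b; c; d] -> exists xa xb xc xd : R,
  [/\ [/\ S a b = xa * xb, S a c = xa * xc & S a d = xa * xd],
      [/\ S b c = xb * xc, S b d = xb * xd & S c d = xc * xd] &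
  [/\ xa ^+ 2 < S a a, xb ^+ 2 < S b b, xc ^+ 2 < S c c & xd ^+ 2 < S d d]].
Proof.
move=> hu.
pose g (i : 'I_4) := nth a [:: a; b; c; d] i.
have ginj : injective g.
  move=> i j /eqP; rewrite /g nth_uniq //= => /eqP/val_inj //.
have [x [hx1 hx2]] := E4g ginj.
exists (x (@Ordinal 4 0 isT)), (x (@Ordinal 4 1 isT)), (x (@Ordinal 4 2 isT)), (x (@Ordinal 4 3 isT)).
have e := hx1; have q := hx2.
split; split.
- exact: (e (@Ordinal 4 0 isT) (@Ordinal 4 1 isT)).
- exact: (e (@Ordinal 4 0 isT) (@Ordinal 4 2 isT)).
- exact: (e (@Ordinal 4 0 isT) (@Ordinal 4 3 isT)).
- exact: (e (@Ordinal 4 1 isT) (@Ordinal 4 2 isT)).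
- exact: (e (@Ordinal 4 1 isT) (@Ordinal 4 3 isT)).
- exact: (e (@Ordinal 4 2 isT) (@Ordinal 4 3 isT)).
- exact: (q (@Ordinal 4 0 isT)).
- exact: (q (@Ordinal 4 1 isT)).
- exact: (q (@Ordinal 4 2 isT)).
- exact: (q (@Ordinal 4 3 isT)).
Qed.

Lemma tetrad i j k l : i != j -> k != l -> i != k -> j != l ->
  S i j * S k l = S i k * S j l.
Proof.
move=> hij hkl hik hjl.
have [eil|nil] := eqVneq i l.
  by rewrite eil (hsym k l) (hsym j l) mulrC.
have [ejk|njk] := eqVneq j k; first by rewrite ejk.
have hu : uniq [:: i; j; k; l] by rewrite /= !inE !negb_or hij hik nil njk hjl hkl.
have [xi [xj [xk [xl [[-> -> _] [_ -> ->] _]]]]] := E4 hu.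
by rewrite mulrACA.
Qed.

Lemma build (gam : 'I_p -> R) : (forall i j, i != j -> S i j = gam i * gam j) ->
  (forall i, gam i ^+ 2 < S i i) -> inF 1 S.
Proof.
move=> h1 h2.
exists (diag_mx (\row_i (S i i - gam i ^+ 2))), (\matrix_(i < p, j < 1) gam i); split.
  split; first exact: diag_mx_is_diag.
  apply: diag_posdef; first exact: diag_mx_is_diag.
  by move=> i; rewrite !mxE eqxx mulr1n subr_gt0.
apply/matrixP => i j; rewrite !mxE big_ord1 !mxE.
have [<-|hij] := eqVneq i j; first by rewrite mulr1n expr2 subrK.
by rewrite mulr0n add0r h1.
Qed.


Hypothesis hp : (4 <= p)%N.
Hypothesis hdiag : forall i, 0 < S i i.

Lemma neq0_l (x y : R) : x * y != 0 -> x != 0.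
Proof. by apply: contraNneq => ->; rewrite mul0r. Qed.
Lemma neq0_r (x y : R) : x * y != 0 -> y != 0.
Proof. by apply: contraNneq => ->; rewrite mulr0. Qed.

Lemma uniq4 (a b c d : 'I_p) : a != b -> a != c -> a != d -> b != c -> b != d -> c != d ->
  uniq [:: a; b; c; d].
Proof. by move=> h1 h2 h3 h4 h5 h6; rewrite /= !inE !negb_or h1 h2 h3 h4 h5 h6. Qed.

Lemma revdir a b : a != b -> S a b != 0 -> inF 1 S.
Proof.
move=> hab sab.
have [/existsP[c /and3P[hca hcb sac]]|hB] :=
  boolP [exists c, [&& c != a, c != b & S a c != 0]].
  have [d /and3P[hda hdb hdc]] := fresh3 hp a b c.
  have hu : uniq [:: a; b; c; d].
    by apply: uniq4; rewrite // eq_sym.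
  have [xa [xb [xc [xd [[eab eac ead] [ebc ebd ecd] [ba bb bc bd]]]]]] := E4 hu.
  have xa0 : xa != 0 by apply: (@neq0_l _ xb); rewrite -eab.
  have xb0 : xb != 0 by apply: (@neq0_r xa); rewrite -eab.
  have xc0 : xc != 0 by apply: (@neq0_r xa); rewrite -eac.
  have sbc : S b c != 0 by rewrite ebc mulf_neq0.
  have g2 : xa ^+ 2 * S b c = S a b * S a c by rewrite ebc eab eac expr2 mulrACA.
  have M0 : forall i j, i != a -> j != a -> i != j -> j != b ->
      S i j * (S a b * S a c) = S a i * S a j * S b c.
    move=> i j hia hja hij hjb.
    rewrite mulrA (tetrad hij hab hia hjb) -mulrA [S j b * _]mulrC.
    rewrite (tetrad (i:=a) (j:=c) (k:=j) (l:=b)) ?(eq_sym a) //.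
    by rewrite (hsym i a) (hsym c b) mulrA.
  have M : forall i j, i != a -> j != a -> i != j ->
      S i j * xa ^+ 2 = S a i * S a j.
    move=> i j hia hja hij; apply: (mulIf sbc); rewrite -mulrA g2.
    have [ejb|hjb] := eqVneq j b; last exact: M0.
    have hib : i != b by rewrite -ejb.
    have hji : j != i by rewrite eq_sym.
    have e := M0 j i hja hia hji hib.
    by rewrite hsym e [S a j * _]mulrC.
  pose gam i := if i == a then xa else S a i / xa.
  apply: (build (gam := gam)).
    move=> i j hij; rewrite /gam.
    have [eia|hia] := eqVneq i a; have [eja|hja] := eqVneq j a.
    - by move: hij; rewrite eia eja eqxx.
    - by rewrite eia mulrC divfK.
    - by rewrite eja hsym divfK.
    apply: (mulIf (expf_neq0 2 xa0)); rewrite M // expr2 mulrACA !divfK //.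
  move=> i; rewrite /gam.
  have [->|hia] := eqVneq i a; first exact: ba.
  have [->|hib] := eqVneq i b; first by rewrite eab [xa * _]mulrC mulfK.
  have [->|hic] := eqVneq i c; first by rewrite eac [xa * _]mulrC mulfK.
  have hu2 : uniq [:: a; b; c; i].
    by apply: uniq4; rewrite // eq_sym.
  have [ya [yb [yc [yi [[fab fac fai] [fbc fbi fci] [_ _ _ bi]]]]]] := E4 hu2.
  have hy : ya ^+ 2 = xa ^+ 2.
    apply: (mulIf sbc); rewrite g2 {1}fbc fab fac expr2 mulrACA //.
  by rewrite fai expr_div_n exprMn hy mulrAC divff ?mul1r // expf_neq0.
have hB' : forall c, c != a -> c != b -> S a c = 0.
  move=> c hca hcb; apply/eqP; apply: contraNT hB => h; apply/existsP; exists c.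
  by rewrite hca hcb h.
have [c /and3P[hca hcb _]] := fresh3 hp a b a.
have [d /and3P[hda hdb hdc]] := fresh3 hp a b c.
have hu : uniq [:: a; b; c; d].
  by apply: uniq4; rewrite // eq_sym.
have [xa [xb [xc [xd [[eab _ _] _ [ba bb _ _]]]]]] := E4 hu.
have hbz : forall j, j != a -> j != b -> S b j = 0.
  move=> j hja hjb.
  have [e /and3P[hea heb hej]] := fresh3 hp a b j.
  have hu2 : uniq [:: a; b; j; e].
    by apply: uniq4; rewrite // eq_sym.
  have [ya [yb [yj [ye [[fab faj _] [fbj _ _] _]]]]] := E4 hu2.
  have ya0 : ya != 0 by apply: (@neq0_l _ yb); rewrite -fab.
  have : ya * yj = 0 by rewrite -faj hB'.
  by move/eqP; rewrite mulf_eq0 (negbTE ya0) /= fbj => /eqP ->; rewrite mulr0.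
have hz : forall i j, i != a -> i != b -> j != a -> j != b -> i != j -> S i j = 0.
  move=> i j hia hib hja hjb hij; apply/eqP.
  have := tetrad hij hab hia hjb; rewrite (hsym i a) (hB' i hia hib) mul0r => /eqP.
  by rewrite mulf_eq0 (negbTE sab) orbF.
pose gam i := if i == a then xa else if i == b then xb else 0.
apply: (build (gam := gam)).
  move=> i j hij; rewrite /gam.
  have [eia|hia] := eqVneq i a; have [eja|hja] := eqVneq j a;
  have [eib|hib] := eqVneq i b; have [ejb|hjb] := eqVneq j b;
  rewrite ?mulr0 ?mul0r; subst.
  all: try by move: hij; rewrite eqxx.
  all: try by rewrite ?eab // hsym eab mulrC.
  all: try by rewrite hB'.
  all: try by rewrite hsym hB'.
  all: try by rewrite hbz.
  all: try by rewrite hsym hbz.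
  all: try by rewrite hz.
  all: try by move: hab; rewrite eqxx.
move=> i; rewrite /gam.
have [->|hia] := eqVneq i a; first exact: ba.
have [->|hib] := eqVneq i b; first exact: bb.
by rewrite expr2 mul0r.
Qed.

End Main.

Lemma two_sel (R : rcfType) p (Sg : 'M[R]_p) (i j : 'I_p) : (i < j)%N -> Sg i j != 0 ->
  exists f : 'I_2 -> 'I_p, incr_sel f /\ ~ inF0 (principal_sub f Sg).
Proof.
move=> hij sij.
exists (fun k : 'I_2 => if val k == 0%N then i else j); split.
  by move=> [[|[|?]] ?] [[|[|?]] ?].
move=> [/is_diag_mxP /(_ (@Ordinal 2 0 isT) (@Ordinal 2 1 isT) isT) e _].
by move: e; rewrite mxE /= => /eqP; rewrite (negbTE sij).
Qed.

Unset Implicit Arguments.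
Set Strict Implicit.

Theorem theorem2 (R : rcfType) (p : nat) (Sigma : 'M[R]_p) :
  (4 <= p)%N -> posdef Sigma ->
  ((inF 1 Sigma /\ ~ inF0 Sigma) <->
   ((forall f : 'I_4 -> 'I_p, incr_sel f -> inF 1 (principal_sub f Sigma)) /\
    (exists f : 'I_2 -> 'I_p, incr_sel f /\ ~ inF0 (principal_sub f Sigma)))).
Proof.
move=> hp hpd.
have hsym : forall i j, Sigma i j = Sigma j i.
  by move=> i j; case: hpd => /matrixP /(_ j i) <- _; rewrite mxE.
have hdiag := pos_diag hpd.
split.
  move=> [[D [G [[dD pD] hS]]] nF0]; split.
    move=> f finc.
    have finj : forall i j : 'I_4, (i : nat) != j -> (f i : nat) != f j.
      move=> i j hij; case: (ltngtP i j) hij => // h _.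
        by rewrite neq_ltn finc.
      by rewrite neq_ltn (finc _ _ h) orbT.
    exists (mxsub f f D), (rowsub f G); split.
      split.
        apply/is_diag_mxP => i j hij; rewrite mxE.
        by move/is_diag_mxP: dD; apply; apply: finj.
      apply: diag_posdef.
        apply/is_diag_mxP => i j hij; rewrite mxE.
        by move/is_diag_mxP: dD; apply; apply: finj.
      by move=> i; rewrite mxE; apply: pos_diag.
    rewrite /principal_sub hS; apply/matrixP => i j; rewrite !mxE; congr (_ + _).
    by apply: eq_bigr => k _; rewrite !mxE.
  have [/existsP [i /existsP [j /andP [hij sij]]] | hnd] :=
    boolP [exists i, exists j, (i != j) && (Sigma i j != 0)].
    case: (ltngtP i j) => h.
    - exact: two_sel h sij.
    - by apply: (two_sel h); rewrite hsym.
    - by move: hij; rewrite (val_inj h) eqxx.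
  exfalso; apply: nF0; split => //.
  apply/is_diag_mxP => i j hij; apply/eqP; apply: contraNT hnd => h.
  by apply/existsP; exists i; apply/existsP; exists j; rewrite h andbT.
move=> [H4 [f [finc nF]]].
have hab : (f (@Ordinal 2 0 isT) < f (@Ordinal 2 1 isT))%N by apply: finc.
set a := f _ in hab; set b := f _ in hab.
have hab' : a != b by rewrite neq_ltn hab.
have hf : forall k : 'I_2, f k = if val k == 0%N then a else b.
  by move=> [[|[|?]] hk] //=; congr f; apply: val_inj.
have sab : Sigma a b != 0.
  apply/negP => /eqP e; apply: nF; split.
    apply/is_diag_mxP => i j; rewrite mxE.
    rewrite !hf; case: i => [[|[|?]] ?] //; case: j => [[|[|?]] ?] //= _; by rewrite // hsym.
  apply: diag_posdef; last by move=> i; rewrite mxE.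
  apply/is_diag_mxP => i j; rewrite mxE.
  rewrite !hf; by case: i => [[|[|?]] ?] //; case: j => [[|[|?]] ?] //= _; rewrite // hsym.
split; first exact: (revdir H4 hsym hp hdiag hab' sab).
move=> [/is_diag_mxP dS _]; move/eqP: sab; apply; apply: dS.
by rewrite neq_ltn hab.
Qed.
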